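(* Let $X$ be a nonzero real Banach space, $m\ge1$, $f_0\colon X\to\,]{-}\infty,\infty]$ proper, convex and lower semicontinuous, and $f_1,\dots,f_m$ real-valued convex continuous functions on $X$. Suppose there exists $x^{**}\in X^{**}$ such that $f_i^{**}(x^{**})\le0$ for all $i=0,\dots,m$. Then for every $\varepsilon>0$ there exists $x\in X$ such that $f_i(x)\le\varepsilon$ for all $i=0,\dots,m$.
   Context: $f^*(x^* )=\sup_{x\in X}[\langle x,x^*\rangle-f(x)]$ on $X^*$ and $f^{**}(x^{**})=\sup_{x^*\in X^*}[\langle x^*,x^{**}\rangle-f^*(x^* )]$ on the bidual $X^{**}$. *)

(* Defs.v *)
From HB Require Import structures.
From mathcomp Require Import all_boot all_order all_algebra.
From mathcomp Require Import all_classical all_reals all_analysis.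
Set Implicit Arguments. Unset Strict Implicit. Unset Printing Implicit Defensive.
Import Order.TTheory GRing.Theory Num.Theory.
Import numFieldNormedType.Exports.
Local Open Scope classical_set_scope.
Local Open Scope ring_scope.

Section Banach_duality.
Context {R : realType} {X : normedModType R}.

Definition is_linear_fun (phi : X -> R) :=
  forall (a : R) (x y : X), phi (a *: x + y) = a * phi x + phi y.

Definition in_dual (phi : X -> R) := is_linear_fun phi /\ continuous phi.

Definition dual_norm (phi : X -> R) : R :=
  sup [set `|phi x| | x in [set x : X | `|x| <= 1]].

Definition in_bidual (xi : (X -> R) -> R) :=
  (forall (a : R) (phi psi : X -> R), in_dual phi -> in_dual psi ->
      xi (fun x => a * phi x + psi x) = a * xi phi + xi psi) /\
  (exists C : R, forall phi, in_dual phi -> `|xi phi| <= C * dual_norm phi).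

Definition conj (f : X -> \bar R) (phi : X -> R) : \bar R :=
  ereal_sup [set ((phi x)%:E - f x)%E | x in [set: X]].

Definition biconj (f : X -> \bar R) (xi : (X -> R) -> R) : \bar R :=
  ereal_sup [set ((xi phi)%:E - conj f phi)%E | phi in in_dual].

Definition proper_fun (f : X -> \bar R) :=
  (forall x, f x != -oo%E) /\ (exists x, f x != +oo%E).

Definition convex_efun (f : X -> \bar R) :=
  forall (x y : X) (t : R), 0 < t -> t < 1 ->
    (f (t *: x + (1 - t) *: y)%R <= t%:E * f x + (1 - t)%:E * f y)%E.

Definition convex_rfun (f : X -> R) :=
  forall (x y : X) (t : R), 0 <= t <= 1 ->
    f (t *: x + (1 - t) *: y) <= t * f x + (1 - t) * f y.

End Banach_duality.

(* Main.v *)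
Require Import Defs.
From HB Require Import structures.
From mathcomp Require Import all_boot all_order all_algebra.
From mathcomp Require Import all_classical all_reals all_analysis.
From mathcomp Require Import ring lra.
Import Order.TTheory GRing.Theory Num.Theory.
Import numFieldNormedType.Exports.
Local Open Scope classical_set_scope.
Local Open Scope ring_scope.
Section AHB.
Variables (R : realType) (V : lmodType R).

Definition goodG (U : set V) (x0 : V) (A : set (V * R)) :=
  [/\ (forall p q (a : R), A p -> A q -> A (a *: p.1 + q.1, a * p.2 + q.2)),
      (forall v a b, A (v, a) -> A (v, b) -> a = b),
      A (x0, 1) &
      (forall v a, A (v, a) -> U v -> a <= 1)].

Lemma goodG0 U x0 A : goodG U x0 A -> A (0, 0).
Proof.
case=> cl _ h _; have := cl _ _ (-1) h h => /=.
by rewrite scaleN1r addNr mulN1r addNr.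
Qed.

Lemma AHB (U : set V) (x0 : V) :
  (forall u v (t : R), U u -> U v -> 0 < t -> t < 1 -> U (t *: u + (1 - t) *: v)) ->
  (forall v, exists2 d : R, 0 < d & U (d *: v)) ->
  ~ U x0 ->
  exists F : V -> R, (forall a u v, F (a *: u + v) = a * F u + F v) /\
     F x0 = 1 /\ (forall u, U u -> F u <= 1).
Proof.
move=> convU absU Ux0.
have U0 : U 0 by have [d _] := absU 0; rewrite scaler0.
pose P := fun A : set (V * R) => A = set0 \/ goodG U x0 A.
have chain : forall F : set (set (V * R)), F `<=` P -> total_on F subset ->
    P (\bigcup_(X in F) X).
  move=> F FP Ftot.
  have gd : forall B p, F B -> B p -> goodG U x0 B.
    move=> B p FB Bp; case: (FP B FB) => // B0; by rewrite B0 in Bp.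
  have [allE|] := pselect (forall B, F B -> B = set0).
    left; apply/seteqP; split=> // p [B FB]; by rewrite (allE _ FB).
  move=> /existsNP [B0] /not_implyP [FB0 B0n].
  have {}B0n : goodG U x0 B0 by case: (FP _ FB0).
  right; split.
  - move=> p q a [B1 FB1 B1p] [B2 FB2 B2q].
    case: (Ftot _ _ FB1 FB2) => [B12|B21].
    + exists B2 => //; case: (gd _ _ FB2 B2q) => cl _ _ _; exact: cl (B12 _ B1p) B2q.
    + exists B1 => //; case: (gd _ _ FB1 B1p) => cl _ _ _; exact: cl B1p (B21 _ B2q).
  - move=> v a b [B1 FB1 B1p] [B2 FB2 B2q].
    case: (Ftot _ _ FB1 FB2) => [B12|B21].
    + case: (gd _ _ FB2 B2q) => _ fn _ _; exact: fn (B12 _ B1p) B2q.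
    + case: (gd _ _ FB1 B1p) => _ fn _ _; exact: fn B1p (B21 _ B2q).
  - by exists B0 => //; case: B0n.
  - move=> v a [B1 FB1 B1p]; case: (gd _ _ FB1 B1p) => _ _ _ dm; exact: dm.
have [A [PA Amax]] := Zorn_bigcup chain.
have gA : goodG U x0 A.
  case: PA => // A0; exfalso.
  pose G0 := [set p : V * R | exists t : R, p = (t *: x0, t)].
  apply: (Amax G0); first rewrite A0.
    split; first by [].
    move=> h0; have : G0 (x0, 1) by exists 1; rewrite scale1r.
    by move/h0.
  have x00 : x0 != 0 by apply/eqP => x00; apply: Ux0; rewrite x00.
  right; split.
  - move=> p q a [t ->] [s ->] /=; exists (a * t + s).
    by rewrite scalerDl scalerA.
  - move=> v a b [t [-> ->]] [s [Ht ->]].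
    apply/eqP; rewrite -subr_eq0; apply/eqP.
    have : (t - s) *: x0 = 0 by rewrite scalerBl Ht subrr.
    by move/eqP; rewrite scaler_eq0 (negbTE x00) orbF => /eqP.
  - by exists 1; rewrite scale1r.
  - move=> v a [t [-> ->]] Ut; rewrite leNgt; apply/negP => t1.
    apply: Ux0.
    have t0 : 0 < t by apply: lt_trans t1.
    have := convU _ _ t^-1 Ut U0.
    rewrite scaler0 addr0 scalerA mulVf ?gt_eqF // scale1r; apply.
      by rewrite invr_gt0.
    by rewrite invf_lt1.
have A00 := goodG0 _ _ _ gA.
case: gA => Acl Afn Ax0 Adom.
have dom : forall v, exists a, A (v, a).
  move=> v; apply/not_existsP => vnd.
  pose Lo := [set r : R | exists d a s, [/\ A (d, a), 0 < s, U (d - s *: v) & r = (a - 1) / s]].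
  pose Up := [set r : R | exists d a t, [/\ A (d, a), 0 < t, U (d + t *: v) & r = (1 - a) / t]].
  have key : forall r r', Lo r -> Up r' -> r <= r'.
    move=> _ _ [d2 [a2 [s [A2 s0 U2 ->]]]] [d1 [a1 [t [A1 t0 U1 ->]]]].
    have st0 : 0 < s + t by rewrite addr_gt0.
    pose l := s / (s + t).
    have l0 : 0 < l by rewrite divr_gt0.
    have l1 : l < 1 by rewrite ltr_pdivrMr // mul1r ltrDl.
    have h1l : 1 - l = t / (s + t).
      by rewrite /l; apply/eqP; rewrite subr_eq -mulrDl addrC divff // gt_eqF.
    have := convU _ _ _ U1 U2 l0 l1.
    have -> : l *: (d1 + t *: v) + (1 - l) *: (d2 - s *: v) = l *: d1 + ((1 - l) *: d2 + 0).
      rewrite addr0 scalerDr scalerBr !scalerA h1l /l.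
      have -> : s / (s + t) * t = t / (s + t) * s by rewrite mulrAC -mulrA mulrC.
      by rewrite addrACA subrr addr0.
    have Az : A (l *: d1 + ((1 - l) *: d2 + 0), l * a1 + ((1 - l) * a2 + 0)).
      by apply: (Acl (d1, a1) ((1 - l) *: d2 + 0, (1 - l) * a2 + 0)) => //;
         apply: (Acl (d2, a2) (0, 0)).
    move=> /(Adom _ _ Az); rewrite !addr0 h1l /l => h.
    have h2 : s * a1 + t * a2 <= s + t.
      have -> : s * a1 + t * a2 = (s / (s + t) * a1 + t / (s + t) * a2) * (s + t).
        by field; rewrite gt_eqF.
      by rewrite -[leRHS]mul1r ler_wpM2r // ltW.
    rewrite ler_pdivrMr // mulrAC ler_pdivlMr //; nra.
  have Lo0 : Lo !=set0.
    have [d d0 Ud] := absU (- v).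
    exists ((0 - 1) / d), 0, 0, d; split => //.
    by rewrite sub0r -scalerN.
  have Up0 : Up !=set0.
    have [d d0 Ud] := absU v.
    exists ((1 - 0) / d), 0, 0, d; split => //.
    by rewrite add0r.
  have hs : has_sup Lo.
    split => //; case: Up0 => r' Ur'; exists r' => r Lr; exact: key.
  pose c := sup Lo.
  have cLo : forall r, Lo r -> r <= c by move=> r Lr; exact: sup_upper_bound.
  have cUp : forall r, Up r -> c <= r.
    by move=> r Ur; apply: ge_sup => // r' Lr'; exact: key.
  pose A' := [set p : V * R | exists d a t, A (d, a) /\ p = (d + t *: v, a + t * c)].
  apply: (Amax A').
    split.
      move=> [d a] Ada; exists d, a, 0; split => //.
      by rewrite scale0r mul0r !addr0.
    move=> h; have : A' (v, c).
      by exists 0, 0, 1; split => //; rewrite scale1r mul1r !add0r.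
    by move/h; apply: vnd.
  right; split.
  - move=> _ _ al [d [a [t [Ada ->]]]] [d' [a' [t' [Ada' ->]]]] /=.
    exists (al *: d + d'), (al * a + a'), (al * t + t'); split.
      exact: (Acl (d, a) (d', a')).
    congr pair; last by ring.
    rewrite scalerDr scalerDl scalerA.
    by rewrite addrACA.
  - move=> _ _ _ [d [a [t [Ada [-> ->]]]]] [d' [a' [t' [Ada' [Ht ->]]]]].
    have [tt'|ntt'] := eqVneq t t'.
      rewrite -tt' in Ht *; move/addIr: Ht => dd'; rewrite -dd' in Ada'.
      by rewrite (Afn _ _ _ Ada Ada').
    exfalso.
    have A1 := Acl (d, a) (d', a') (-1) Ada Ada'.
    have A2 := Acl _ (0, 0) ((t - t')^-1) A1 A00.
    apply: (vnd _ _); rewrite /= addr0 in A2.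
    suff <- : (t - t')^-1 *: (-1 *: d + d') = v by exact: A2.
    have -> : -1 *: d + d' = (t - t') *: v.
      rewrite scaleN1r scalerBl addrC; apply/eqP.
      by rewrite subr_eq addrAC (addrC (t *: v)) Ht addrK.
    by rewrite scalerA mulVf ?scale1r // subr_eq0.
  - by exists x0, 1, 0; split => //; rewrite scale0r mul0r !addr0.
  - move=> _ _ [d [a [t [Ada [-> ->]]]]] Udt.
    case: (ltgtP t 0) => [tn|tp|t0]; last first.
      rewrite t0 in Udt *.
      by rewrite mul0r addr0; apply: Adom Ada _; rewrite scale0r addr0 in Udt.
    + have : Up ((1 - a) / t) by exists d, a, t.
      move/cUp; rewrite ler_pdivlMr // => h.
      lra.
    + have : Lo ((a - 1) / (- t)).
        exists d, a, (- t). split; [done | by rewrite oppr_gt0 | | done].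
        by rewrite scaleNr opprK.
      move/cLo; rewrite ler_pdivrMr ?oppr_gt0 // => h.
      rewrite mulrN in h; lra.
pose F v := xget 0 [set a | A (v, a)].
have AF : forall v, A (v, F v).
  by move=> v; have := @xgetPex _ (0:R) [set a | A (v, a)] (dom v).
exists F; split; [|split].
- move=> a u v; apply: (Afn _ _ _ (AF _)).
  exact: (Acl (u, F u) (v, F v)).
- exact: Afn (AF _) Ax0.
- move=> u Uu; exact: Adom (AF u) Uu.
Qed.
End AHB.
Section Lin.
Variables (R : realType) (X : normedModType R).

Lemma lin0 {phi : X -> R} : is_linear_fun phi -> phi 0 = 0.
Proof.
move=> L; have := L 1 0 0; rewrite scale1r addr0 mul1r => h; lra.
Qed.

Lemma linZ {phi : X -> R} a x : is_linear_fun phi -> phi (a *: x) = a * phi x.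
Proof. by move=> L; have := L a x 0; rewrite addr0 (lin0 L) addr0. Qed.

Lemma linD {phi : X -> R} x y : is_linear_fun phi -> phi (x + y) = phi x + phi y.
Proof. by move=> L; have := L 1 x y; rewrite scale1r mul1r. Qed.

Lemma linN {phi : X -> R} x : is_linear_fun phi -> phi (- x) = - phi x.
Proof. by move=> L; rewrite -scaleN1r (linZ _ _ L) mulN1r. Qed.

Lemma linB {phi : X -> R} x y : is_linear_fun phi -> phi (x - y) = phi x - phi y.
Proof. by move=> L; rewrite (linD _ _ L) (linN _ L). Qed.

Lemma lin_cont (phi : X -> R) (r C : R) : is_linear_fun phi -> 0 < r ->
  (forall h, `|h| < r -> phi h <= C) -> continuous phi.
Proof.
move=> L r0 hC x; apply/cvgrPdist_lt => e e0.
pose C' := `|C| + 1.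
have C'0 : 0 < C' by rewrite /C'; apply: ltr_pwDr => //.
have bd : forall h, `|h| < r -> `|phi h| < C'.
  move=> h hr; rewrite /C' ltr_norml; apply/andP; split.
    have : `|- h| < r by rewrite normrN.
    move/hC; rewrite (linN _ L) => h1.
    have := ler_norm C; lra.
  have := hC _ hr; have := ler_norm C; lra.
apply/nbhs_ballP; exists (r * e / C'); first by rewrite /= !divr_gt0 ?mulr_gt0.
move=> y; rewrite -ball_normE /ball_ /= => hy.
have ce0 : 0 < C' / e by rewrite divr_gt0.
have hh : `|(C' / e) *: (x - y)| < r.
  rewrite normrZ gtr0_norm //.
  have -> : r = C' / e * (r * e / C') by field; rewrite !gt_eqF.
  by rewrite ltr_pM2l.
have := bd _ hh; rewrite (linZ _ _ L) normrM gtr0_norm // (linB _ _ L) => h.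
have -> : `|phi x - phi y| = e / C' * (C' / e * `|phi x - phi y|).
  by field; rewrite !gt_eqF.
have h2 : e / C' * (C' / e * `|phi x - phi y|) < e / C' * C'.
  by rewrite ltr_pM2l ?divr_gt0.
by rewrite divfK ?gt_eqF in h2.
Qed.

Lemma dual0 : in_dual (fun _ : X => (0 : R)).
Proof.
split; first by move=> a x y; rewrite mulr0 addr0.
by move=> x; exact: cvg_cst.
Qed.

Lemma dual_comb (a : R) (phi psi : X -> R) : in_dual phi -> in_dual psi ->
  in_dual (fun x => a * phi x + psi x).
Proof.
move=> [Lp Cp] [Ls Cs]; split.
  move=> b x y; rewrite (Lp b x y) (Ls b x y); ring.
move=> x; apply: cvgD; last exact: Cs.
by apply: cvgM; [exact: cvg_cst | exact: Cp].
Qed.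

Variable xi : (X -> R) -> R.
Hypothesis hxi : in_bidual xi.

Lemma xi0 : xi (fun _ => 0) = 0.
Proof.
case: hxi => L _; have := L 1 _ _ dual0 dual0.
have -> : (fun x : X => 1 * (0:R) + 0) = (fun _ => 0).
  by apply: funext => x; rewrite mul1r addr0.
rewrite mul1r => h; lra.
Qed.

Lemma xiZ a phi : in_dual phi -> xi (fun x => a * phi x) = a * xi phi.
Proof.
move=> Dp; case: hxi => L _; have := L a _ _ Dp dual0.
rewrite xi0 addr0 => <-; congr xi; apply: funext => x; by rewrite addr0.
Qed.

Lemma xiC a phi psi : in_dual phi -> in_dual psi ->
  xi (fun x => a * phi x + psi x) = a * xi phi + xi psi.
Proof. by case: hxi => L _; apply: L. Qed.

Lemma dual_sum (I : Type) (s : seq I) (phi : I -> X -> R) :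
  (forall i, in_dual (phi i)) -> in_dual (fun x => \sum_(i <- s) phi i x).
Proof.
move=> D; elim: s => [|a s IH].
  have -> : (fun x : X => \sum_(i <- [::]) phi i x) = (fun _ => 0).
    by apply: funext => x; rewrite big_nil.
  exact: dual0.
have -> : (fun x : X => \sum_(i <- a :: s) phi i x) =
   (fun x => 1 * phi a x + (fun y => \sum_(i <- s) phi i y) x).
  by apply: funext => x; rewrite big_cons mul1r.
exact: dual_comb.
Qed.

Lemma xi_sum (I : Type) (s : seq I) (phi : I -> X -> R) :
  (forall i, in_dual (phi i)) ->
  xi (fun x => \sum_(i <- s) phi i x) = \sum_(i <- s) xi (phi i).
Proof.
move=> D; elim: s => [|a s IH].
  have -> : (fun x : X => \sum_(i <- [::]) phi i x) = (fun _ => 0).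
    by apply: funext => x; rewrite big_nil.
  by rewrite xi0 big_nil.
have -> : (fun x : X => \sum_(i <- a :: s) phi i x) =
   (fun x => 1 * phi a x + (fun y => \sum_(i <- s) phi i y) x).
  by apply: funext => x; rewrite big_cons mul1r.
by rewrite xiC // ?mul1r ?IH ?big_cons //; exact: dual_sum.
Qed.

Lemma pick_conj (g : X -> \bar R) : (forall x, g x != -oo%E) ->
  (biconj g xi <= 0)%E ->
  forall phi, in_dual phi -> forall l eta, 0 < l -> 0 < eta ->
  exists x r, g x = r%:E /\ xi phi - eta < phi x - l * r.
Proof.
move=> gN hb phi Dp l eta l0 eta0.
pose psi := fun x => l^-1 * phi x.
have Dpsi : in_dual psi.
  have -> : psi = (fun x => l^-1 * phi x + (fun _ => 0) x).
    by apply: funext => x; rewrite addr0.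
  by apply: dual_comb => //; exact: dual0.
have xpsi : xi psi = l^-1 * xi phi by apply: xiZ.
have h1 : ((xi psi)%:E - conj g psi <= 0)%E.
  apply: le_trans hb; apply: ereal_sup_ubound; by exists psi.
have h2 : ((xi psi - eta / l)%:E < conj g psi)%E.
  move: h1; case: (conj g psi) => [c| |] //=.
    rewrite -EFinD !lee_fin lte_fin => h.
    have : 0 < eta / l by rewrite divr_gt0.
    lra.
  by rewrite ltry.
have [y [x _ <-] hy] := ereal_sup_gt h2.
move: hy; have := gN x; case E: (g x) => [r| |] //= _.
  rewrite -EFinD lte_fin => hy.
  exists x, r; split => //.
  rewrite xpsi /psi in hy.
  have -> : xi phi - eta = l * (l^-1 * xi phi - eta / l) by field; rewrite gt_eqF.
  have -> : phi x - l * r = l * (l^-1 * phi x - r) by field; rewrite gt_eqF.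
  by rewrite ltr_pM2l.
Qed.

End Lin.
Arguments lin0 {R X phi}.
Arguments linZ {R X phi} a x.
Arguments linD {R X phi} x y.
Arguments linN {R X phi} x.
Arguments linB {R X phi} x y.
Section Minor.
Variables (R : realType) (X : normedModType R).

Lemma pairE (A B : Type) (p q : A * B) : p.1 = q.1 -> p.2 = q.2 -> p = q.
Proof. by case: p q => [? ?] [? ?] /= -> ->. Qed.

Lemma ext_convex (f : X -> \bar R) x x' (a a' t : R) : convex_efun f ->
  (forall y, f y != -oo%E) -> (f x < a%:E)%E -> (f x' < a'%:E)%E ->
  0 < t -> t < 1 -> (f (t *: x + (1 - t) *: x')%R < (t * a + (1 - t) * a')%R%:E)%E.
Proof.
move=> cf fN hx hx' t0 t1.
apply: le_lt_trans (cf x x' t t0 t1) _.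
move: hx hx'; have := fN x; have := fN x'.
case: (f x) => [b| |] //; case: (f x') => [b'| |] //= _ _.
rewrite !lte_fin => hb hb'.
have t10 : 0 < 1 - t by rewrite subr_gt0.
apply: ltr_leD; first by rewrite ltr_pM2l.
by rewrite ler_pM2l // ltW.
Qed.

Lemma minorant (f : X -> \bar R) : proper_fun f -> convex_efun f ->
  lower_semicontinuous f ->
  exists psi, in_dual psi /\ exists beta : R, forall x r, f x = r%:E -> psi x - r <= beta.
Proof.
move=> [fN [xb fxb]] cf lf.
have [r0 fr0] : exists r0, f xb = r0%:E.
  move: (fN xb) fxb; case: (f xb) => [r| |] //; by exists r.
have [Vb /nbhs_ballP [rho /= rho0 hrho] hV] : exists2 V, nbhs xb V & forall y, V y -> ((r0 - 1)%:E < f y)%E.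
  by apply: lf; rewrite fr0 lte_fin ltrBlDr ltrDl.
have lb : forall y, `|xb - y| < rho -> ((r0 - 1)%:E < f y)%E.
  by move=> y hy; apply: hV; apply: hrho; rewrite -ball_normE /ball_ /=.
pose W := [set w : (X * R)%type | exists x t z s, [/\ (f x < t%:E)%E, `|xb - z| < rho,
   s < r0 - 1 & w = (x - z, t - s)]].
pose w0 : (X * R)%type := (0, 3).
have Ww0 : W w0.
  exists xb, (r0 + 1), xb, (r0 - 2); split.
  - by rewrite fr0 lte_fin ltrDl.
  - by rewrite subrr normr0.
  - lra.
  - by apply: pairE => /=; [rewrite subrr | lra].
pose U := [set u | W (u + w0)].
have convW : forall p q t, W p -> W q -> 0 < t -> t < 1 -> W (t *: p + (1 - t) *: q).
  move=> _ _ t [x [a [z [s [hx hz hs ->]]]]] [x' [a' [z' [s' [hx' hz' hs' ->]]]]] t0 t1.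
  have t10 : 0 < 1 - t by rewrite subr_gt0.
  exists (t *: x + (1 - t) *: x'), (t * a + (1 - t) * a'),
    (t *: z + (1 - t) *: z'), (t * s + (1 - t) * s'); split.
  - exact: ext_convex.
  - have -> : xb - (t *: z + (1 - t) *: z') = t *: (xb - z) + (1 - t) *: (xb - z').
      have e1 : t + (1 - t) = 1 by ring.
      by rewrite !scalerBr addrACA -opprD -scalerDl e1 scale1r.
    apply: le_lt_trans (ler_normD _ _) _.
    rewrite !normrZ !gtr0_norm //.
    have -> : rho = t * rho + (1 - t) * rho by ring.
    by apply: ltrD; rewrite ltr_pM2l.
  - have -> : r0 - 1 = t * (r0 - 1) + (1 - t) * (r0 - 1) by ring.
    by apply: ltrD; rewrite ltr_pM2l.
  - have sE : forall u v : R, u *: v = u * v by [].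
    apply: pairE => /=; last by rewrite !sE; ring.
    by rewrite !scalerBr addrACA opprD.
have convU : forall u v (t : R), U u -> U v -> 0 < t -> t < 1 -> U (t *: u + (1 - t) *: v).
  move=> u v t Uu Uv t0 t1; rewrite /U /=.
  have -> : t *: u + (1 - t) *: v + w0 = t *: (u + w0) + (1 - t) *: (v + w0).
    have e1 : t + (1 - t) = 1 by ring.
    by rewrite !scalerDr addrACA -scalerDl e1 scale1r.
  exact: convW.
have absU : forall v, exists2 d : R, 0 < d & U (d *: v).
  move=> [h b].
  pose D := 1 + `|h| + `|b|.
  have D0 : 0 < D by rewrite /D; have := normr_ge0 h; have := normr_ge0 b; lra.
  pose e := Num.min rho 1.
  have e0 : 0 < e by rewrite /e lt_min rho0 ltr01.
  have erho : e <= rho by rewrite /e ge_min lexx.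
  have e1 : e <= 1 by rewrite /e ge_min lexx orbT.
  pose d := e / (2 * D).
  have d0 : 0 < d by rewrite divr_gt0 // mulr_gt0.
  have dD : d * D = e / 2 by rewrite /d; field; rewrite gt_eqF.
  have hD : `|h| <= D by rewrite /D; have := normr_ge0 b; lra.
  have bD : `|b| <= D by rewrite /D; have := normr_ge0 h; lra.
  have dh : d * `|h| <= e / 2 by rewrite -dD ler_pM2l.
  have db : d * `|b| <= e / 2 by rewrite -dD ler_pM2l.
  exists d => //.
  exists xb, (r0 + 1), (xb - d *: h), (r0 - 2 - d * b); split.
  - by rewrite fr0 lte_fin ltrDl.
  - rewrite opprB addrC subrK normrZ gtr0_norm //; lra.
  - have := ler_norm (- b); rewrite normrN => hb.
    have : - (d * b) <= d * `|b| by rewrite -mulrN ler_pM2l.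
    lra.
  - have sE : forall u v : R, u *: v = u * v by [].
    by apply: pairE => /=; [rewrite addr0 opprB addrCA subrr addr0 | rewrite sE; ring].
have nU : ~ U (- w0).
  rewrite /U /= addNr => -[x [t [z [s [hx hz hs]]]]] /esym e0.
  have [e1 e2] : x - z = 0 /\ t - s = 0 by case: e0.
  move/eqP: e1; rewrite subr_eq0 => /eqP xz.
  move/eqP: e2; rewrite subr_eq0 => /eqP ts.
  rewrite -xz in hz; have h1 := lb _ hz.
  rewrite ts in hx; have := lt_trans h1 hx.
  by rewrite lte_fin; lra.
have [F [FL [Fx0 FU]]] := @AHB _ _ U (- w0) convU absU nU.
have F0 : F 0 = 0 by have := FL 1 0 0; rewrite scale1r addr0 mul1r => h; lra.
have FW : forall w, W w -> F w <= 0.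
  move=> w Ww.
  have : U (w - w0) by rewrite /U /= subrK.
  move/FU; have := FL 1 w (- w0); rewrite scale1r mul1r Fx0 => ->; lra.
pose mu := F (0, 1).
pose phi := fun x : X => F (x, 0).
have Fdec : forall p : (X * R)%type, F p = phi p.1 + p.2 * mu.
  move=> p; rewrite /phi /mu addrC -(FL p.2 (0, 1) (p.1, 0)).
  have sE : forall u v : R, u *: v = u * v by [].
  by congr F; apply: pairE => /=; [rewrite scaler0 add0r | rewrite sE mulr1 addr0].
have mu3 : mu = - 3^-1.
  have := Fx0; rewrite Fdec /= /phi.
  have -> : (- 0 : X) = 0 by rewrite oppr0.
  rewrite F0 add0r => h.
  have -> : mu = (- 3 * mu) / (- 3) by field.
  by rewrite h; field.
have Lphi : is_linear_fun phi.
  move=> a x y; rewrite /phi -FL; congr F.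
  by apply: pairE => //=; rewrite scaler0 addr0.
have key : forall x t z s, (f x < t%:E)%E -> `|xb - z| < rho -> s < r0 - 1 ->
   3 * phi (x - z) <= t - s.
  move=> x t z s hx hz hs.
  have := FW (x - z, t - s) (ex_intro _ x (ex_intro _ t (ex_intro _ z (ex_intro _ s (And4 hx hz hs erefl))))).
  rewrite Fdec /= mu3 => h; lra.
exists (fun x => 3 * phi x + (fun _ => 0) x); split.
  split.
    move=> a x y; rewrite (Lphi a x y); ring.
  apply: (@lin_cont _ _ _ rho 3).
  - move=> a x y; rewrite (Lphi a x y); ring.
  - done.
  - move=> h hh; rewrite addr0.
    have := key xb (r0 + 1) (xb - h) (r0 - 2).
    have e : xb - (xb - h) = h by rewrite opprB addrCA subrr addr0.
    have r01 : r0 < r0 + 1 by rewrite ltrDl.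
    rewrite e fr0 lte_fin => /(_ r01) /(_ hh).
    have -> : r0 + 1 - (r0 - 2) = 3 by ring.
    by apply; lra.
exists (3 * phi xb - r0 + 3) => x r fx.
have := key x (r + 1) xb (r0 - 2).
have r01 : r < r + 1 by rewrite ltrDl.
have r02 : r0 - 2 < r0 - 1 by lra.
rewrite fx lte_fin subrr normr0 (linB _ _ Lphi) => /(_ r01 rho0 r02).
rewrite addr0; lra.
Qed.

End Minor.
Lemma le_sum_term {I : finType} {R : realType} (F : I -> R) i :
  (forall j, 0 <= F j) -> F i <= \sum_j F j.
Proof. by move=> F0; rewrite (bigD1 i) //= lerDl sumr_ge0. Qed.

Lemma sum_if1 {I : finType} {R : realType} {V : zmodType} (psi : I -> V -> R) i (h : V) :
  (forall j, psi j 0 = 0) ->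
  \sum_j psi j (if j == i then h else 0) = psi i h.
Proof.
move=> p0; rewrite (bigD1 i) //= eqxx big1 ?addr0 //.
by move=> j /negbTE ->.
Qed.

Lemma final_aux (R : realType) (a b c d : R) :
  0 < a - b + c -> a <= b + d -> c + d = 0 -> False.
Proof. move=> h1 h2 h3; lra. Qed.

Theorem lemma7p1 (R : realType) (X : completeNormedModType R) (m : nat)
  (f0 : X -> \bar R) (f : 'I_m -> X -> R) :
  (exists x : X, x != 0) ->
  (0 < m)%N ->
  proper_fun f0 -> convex_efun f0 -> lower_semicontinuous f0 ->
  (forall i, convex_rfun (f i)) -> (forall i, continuous (f i)) ->
  (exists xi : (X -> R) -> R, in_bidual xi /\
     (biconj f0 xi <= 0)%E /\
     (forall i, (biconj (fun x => (f i x)%:E) xi <= 0)%E)) ->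
  forall eps : R, 0 < eps ->
    exists x : X, (f0 x <= eps%:E)%E /\ (forall i, f i x <= eps).
Proof.
move=> _ _ pf0 cf0 lf0 cf contf [xi [hxi [hb0 hbi]]] eps eps0.
have [//|nex] := pselect (exists x : X, (f0 x <= eps%:E)%E /\ (forall i, f i x <= eps)).
exfalso.
pose I := option 'I_m.
pose g (i : I) : X -> \bar R := match i with None => f0 | Some j => fun x => (f j x)%:E end.
have gN : forall i x, g i x != -oo%E.
  by case=> [j|] x //=; case: pf0.
have gconv : forall i, convex_efun (g i).
  case=> [j|] //= x y t t0 t1; rewrite -!EFinM -EFinD lee_fin.
  by apply: cf; rewrite !ltW.
have glsc : forall i, lower_semicontinuous (g i).
  case=> [j|] //= x a; rewrite lte_fin => ax.
  exists [set y | a < f j y]; last by move=> y /= ?; rewrite lte_fin.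
  exact: (cvgr_gt _ (contf j x) _ ax).
have [xb fxb] := pf0.2.
have [r0 fr0] : exists r0, f0 xb = r0%:E.
  move: (pf0.1 xb) fxb; case: (f0 xb) => [r| |] //; by exists r.
have gprop : forall i, proper_fun (g i).
  by move=> i; split; [exact: gN | exists xb; case: i => [j|] //=; rewrite fr0].
have hbg : forall i, (biconj (g i) xi <= 0)%E by case.
pose gx (i : I) : R := match i with None => r0 | Some j => f j xb end.
have ggx : forall i, g i xb = (gx i)%:E by case=> [j|] //=.
have [rb rb0 hrb] : exists2 rb : R, 0 < rb & forall y, `|xb - y| < rb -> forall j, f j y < f j xb + 2^-1.
  have : \forall y \near xb, forall j, f j y < f j xb + 2^-1.
    apply: filter_forall => j; apply: (cvgr_lt _ (contf j xb)).
    by rewrite ltrDl invr_gt0.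
  move=> /nbhs_ballP [rb /= rb0 hrb]; exists rb => // y hy.
  by apply: hrb; rewrite -ball_normE /ball_ /=.
pose V := ((I -> X) * (I -> R))%type.
pose W := [set w : V | exists (xs : I -> X) (x : X) (ys : I -> R),
   (forall i, (g i (xs i) < (ys i)%:E)%E) /\ w = (fun i => xs i - x, fun i => ys i - eps)].
pose w0 : V := (fun _ => 0, fun i => gx i + 1 - eps).
have sE : forall u v : R, u *: v = u * v by [].
have Ww0 : W w0.
  exists (fun _ => xb), xb, (fun i => gx i + 1); split.
    by move=> i; rewrite ggx lte_fin ltrDl.
  by apply: pairE; apply: funext => i /=; rewrite ?subrr.
pose U := [set u | W (u + w0)].
have convW : forall p q t, W p -> W q -> 0 < t -> t < 1 -> W (t *: p + (1 - t) *: q).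
  move=> _ _ t [xs [x [ys [hx ->]]]] [xs' [x' [ys' [hx' ->]]]] t0 t1.
  exists (fun i => t *: xs i + (1 - t) *: xs' i), (t *: x + (1 - t) *: x'),
    (fun i => t * ys i + (1 - t) * ys' i); split.
    by move=> i; apply: ext_convex.
  apply: pairE; apply: funext => i /=.
    by rewrite !scalerBr addrACA opprD.
  transitivity (t * (ys i - eps) + (1 - t) * (ys' i - eps)); first by [].
  ring.
have convU : forall u v (t : R), U u -> U v -> 0 < t -> t < 1 -> U (t *: u + (1 - t) *: v).
  move=> u v t Uu Uv t0 t1; rewrite /U /=.
  have -> : t *: u + (1 - t) *: v + w0 = t *: (u + w0) + (1 - t) *: (v + w0).
    have e1 : t + (1 - t) = 1 by ring.
    by rewrite !scalerDr addrACA -scalerDl e1 scale1r.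
  exact: convW.
have absU : forall v, exists2 d : R, 0 < d & U (d *: v).
  move=> [a b].
  pose M := 1 + \sum_i (`|a i| + `|b i|).
  have S0 : 0 <= \sum_i (`|a i| + `|b i|) by apply: sumr_ge0 => i _; apply: addr_ge0.
  have M0 : 0 < M by rewrite /M; lra.
  have aM : forall i, `|a i| <= M.
    move=> i; have := le_sum_term (fun j => `|a j| + `|b j|) i.
    have := normr_ge0 (b i); rewrite /M => h1 h2.
    have := h2 (fun j => addr_ge0 (normr_ge0 _) (normr_ge0 _)); lra.
  have bM : forall i, `|b i| <= M.
    move=> i; have := le_sum_term (fun j => `|a j| + `|b j|) i.
    have := normr_ge0 (a i); rewrite /M => h1 h2.
    have := h2 (fun j => addr_ge0 (normr_ge0 _) (normr_ge0 _)); lra.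
  pose e := Num.min rb 1.
  have e0 : 0 < e by rewrite /e lt_min rb0 ltr01.
  have erb : e <= rb by rewrite /e ge_min lexx.
  have e1 : e <= 1 by rewrite /e ge_min lexx orbT.
  pose d := e / (4 * M).
  have d0 : 0 < d by rewrite divr_gt0 // mulr_gt0.
  have dM : d * M = e / 4 by rewrite /d; field; rewrite gt_eqF.
  have db : forall i, - (d * b i) <= e / 4.
    move=> i; have := ler_norm (- b i); rewrite normrN => hb.
    have : - (d * b i) <= d * M.
      by rewrite -mulrN ler_pM2l //; apply: le_trans hb _.
    by rewrite dM.
  pose x := xb - d *: a None.
  pose xs := fun i => x + d *: a i.
  exists d => //.
  exists xs, x, (fun i => gx i + 1 + d * b i); split.
    case=> [j|] /=.
      have hj : `|xb - xs (Some j)| < rb.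
        have -> : xb - xs (Some j) = d *: (a None - a (Some j)).
          rewrite /xs /x scalerBr opprD opprB addrA addrCA subrr addr0.
          by [].
        rewrite normrZ gtr0_norm //.
        apply: le_lt_trans (_ : d * (M + M) < rb).
          by rewrite ler_pM2l //; apply: le_trans (ler_normB _ _) _; apply: lerD.
        rewrite mulrDr dM; have : e / 4 + e / 4 < e by lra.
        lra.
      have := hrb _ hj j; rewrite lte_fin; have := db (Some j); lra.
    rewrite /xs /x subrK fr0 lte_fin; have := db None; lra.
  apply: pairE; apply: funext => i /=.
    transitivity (d *: a i + 0); first by [].
    by rewrite addr0 /xs addrC addKr.
  transitivity (d * b i + (gx i + 1 - eps)); first by [].
  ring.
have nU : ~ U (- w0).
  rewrite /U /= addNr => -[xs [x [ys [hx e]]]].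
  have e1 := congr1 fst e; have e2 := congr1 snd e.
  have xsx : forall i, xs i = x.
    move=> i; have := congr1 (fun h => h i) e1 => /= /eqP.
    by rewrite eq_sym subr_eq0 => /eqP.
  have ysx : forall i, ys i = eps.
    move=> i; have := congr1 (fun h => h i) e2 => /= /eqP.
    by rewrite eq_sym subr_eq0 => /eqP.
  apply: nex; exists x; split.
    by have := hx None; rewrite /= xsx ysx => /ltW.
  by move=> j; have := hx (Some j); rewrite /= xsx ysx lte_fin => /ltW.
have [F [FL [Fx0 FU]]] := @AHB _ _ U (- w0) convU absU nU.
have F0 : F 0 = 0 by have := FL 1 0 0; rewrite scale1r addr0 mul1r => h; lra.
have FD : forall u v, F (u + v) = F u + F v by move=> u v; have := FL 1 u v; rewrite scale1r mul1r.
have FZ : forall c u, F (c *: u) = c * F u by move=> c u; have := FL c u 0; rewrite addr0 F0 addr0.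
have FW : forall w, W w -> F w <= 0.
  move=> w Ww.
  have : U (w - w0) by rewrite /U /= subrK.
  move/FU; have := FL 1 w (- w0); rewrite scale1r mul1r Fx0 => ->; lra.
pose E (i : I) (x : X) : I -> X := fun j => if j == i then x else 0.
pose ER (i : I) (r : R) : I -> R := fun j => if j == i then r else 0.
pose phi i x := F (E i x, 0).
pose mu i := F (0, ER i 1).
have fstS : forall (s : seq I) (q : I -> V), (\sum_(i <- s) q i).1 = \sum_(i <- s) (q i).1.
  by move=> s q; elim: s => [|i s IH]; rewrite ?big_nil ?big_cons //= IH.
have sndS : forall (s : seq I) (q : I -> V), (\sum_(i <- s) q i).2 = \sum_(i <- s) (q i).2.
  by move=> s q; elim: s => [|i s IH]; rewrite ?big_nil ?big_cons //= IH.
have FS : forall (s : seq I) (q : I -> V), F (\sum_(i <- s) q i) = \sum_(i <- s) F (q i).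
  by move=> s q; elim: s => [|i s IH]; rewrite ?big_nil ?big_cons // FD IH.
have Fdec : forall p : V, F p = \sum_i phi i (p.1 i) + \sum_i p.2 i * mu i.
  move=> p.
  have ep : p = \sum_i ((E i (p.1 i), 0) + p.2 i *: (0, ER i 1)).
    apply: pairE; apply: funext => j.
      rewrite fstS fct_sumE.
      rewrite (eq_bigr (fun i => if j == i then p.1 i else 0)); last first.
        move=> i _; transitivity (E i (p.1 i) j + p.2 i *: (0 : X)); first by [].
        by rewrite scaler0 addr0 /E.
      rewrite (bigD1 j) //= eqxx big1 ?addr0 //.
      by move=> i /negbTE; rewrite eq_sym => ->.
    rewrite sndS fct_sumE.
    rewrite (eq_bigr (fun i => if j == i then p.2 i else 0)); last first.
      move=> i _; transitivity (0 + p.2 i * ER i 1 j); first by [].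
      by rewrite add0r /ER; case: (j == i); rewrite ?mulr1 ?mulr0.
    rewrite (bigD1 j) //= eqxx big1 ?addr0 //.
    by move=> i /negbTE; rewrite eq_sym => ->.
  rewrite {1}ep FS -big_split; apply: eq_bigr => i _.
  by rewrite FD FZ.
have Lphi : forall i, is_linear_fun (phi i).
  move=> i a x y; rewrite /phi -FL; congr F.
  apply: pairE; apply: funext => j /=.
    transitivity (a *: E i x j + E i y j); last by [].
    by rewrite /E; case: (j == i); rewrite ?scaler0 ?addr0.
  transitivity (a *: (0 : R) + 0); last by [].
  by rewrite scaler0 addr0.
have phi0 : forall i, phi i 0 = 0 by move=> i; apply: lin0.
have FWx : forall xs x ys, (forall i, (g i (xs i) < (ys i)%:E)%E) ->
    \sum_i phi i (xs i - x) + \sum_i (ys i - eps) * mu i <= 0.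
  move=> xs x ys hx; rewrite -(Fdec (fun i => xs i - x, fun i => ys i - eps)).
  by apply: FW; exists xs, x, ys.
pose C := \sum_i (gx i + 1 - eps) * mu i.
have Cm1 : C = -1.
  have := Fx0; rewrite -scaleN1r FZ Fdec /= => h.
  have : \sum_i phi i 0 = 0 by apply: big1 => i _.
  rewrite /C; move=> h2; rewrite h2 add0r in h; lra.
have sum0 : forall z, \sum_i phi i z = 0.
  move=> z; apply/eqP; apply/negP => /negP Bn.
  pose t := (1 - C) / (\sum_i phi i z).
  have := FWx (fun _ => xb) (xb - t *: z) (fun i => gx i + 1).
  have e1 : xb - (xb - t *: z) = t *: z by rewrite opprB addrCA subrr addr0.
  rewrite e1; have -> : \sum_i phi i (t *: z) = t * \sum_i phi i z.
    by rewrite mulr_sumr; apply: eq_bigr => i _; rewrite (linZ _ _ (Lphi i)).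
  rewrite /t divfK // -/C.
  have : (forall i, (g i xb < (gx i + 1)%:E)%E) by move=> i; rewrite ggx lte_fin ltrDl.
  move=> hh /(_ hh); lra.
have mu0 : forall i, mu i <= 0.
  move=> i; rewrite leNgt; apply/negP => mup.
  pose T := (1 + `|C|) / mu i.
  have T0 : 0 <= T by rewrite /T divr_ge0 // ?ltW // addr_ge0.
  have := FWx (fun _ => xb) xb (fun j => gx j + 1 + ER i T j).
  have -> : \sum_j phi j (xb - xb) = 0 by rewrite subrr; apply: big1 => j _.
  have -> : \sum_j (gx j + 1 + ER i T j - eps) * mu j = C + T * mu i.
    have s1 := sum_if1 (fun j r => r * mu j) i T (fun j => mul0r _).
    rewrite /C -s1 -big_split /=; apply: eq_bigr => j _; rewrite /ER; case: (j == i); ring.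
  have : (forall j, (g j xb < (gx j + 1 + ER i T j)%:E)%E).
    move=> j; rewrite ggx lte_fin /ER /= -addrA ltrDl; case: (j == i); rewrite ?addr0 //; apply: (lt_le_trans ltr01); rewrite lerDl; exact: T0.
  move=> hh /(_ hh); rewrite /T divfK ?gt_eqF //.
  have := ler_norm (- C); rewrite normrN; lra.
pose nu i := - mu i.
have nu0 : forall i, 0 <= nu i by move=> i; rewrite /nu oppr_ge0.
pose S := \sum_i nu i.
have S0 : 0 < S.
  rewrite lt_def sumr_ge0 ?andbT //; apply/eqP => S0.
  have nz := psumr_eq0P (fun i _ => nu0 i) S0.
  have : C = 0.
    rewrite /C big1 // => i _.
    have : nu i = 0 by apply: nz.
    by rewrite /nu => /eqP; rewrite oppr_eq0 => /eqP ->; rewrite mulr0.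
  lra.
have K : forall xs ys, (forall i, (g i (xs i) < (ys i)%:E)%E) ->
    \sum_i phi i (xs i) <= \sum_i nu i * (ys i - eps).
  move=> xs ys hx; have := FWx xs 0 ys hx.
  have -> : \sum_i (ys i - eps) * mu i = - \sum_i nu i * (ys i - eps).
    rewrite -sumrN; apply: eq_bigr => i _; rewrite /nu; ring.
  under eq_bigr do rewrite subr0.
  lra.
have Dphi : forall i, in_dual (phi i).
  move=> i; split; first exact: Lphi.
  apply: (@lin_cont _ _ _ rb 1 (Lphi i) rb0) => h hh.
  pose x := if i is None then xb - h else xb.
  pose xs := fun j => x + E i h j.
  have := FWx xs x (fun j => gx j + 1).
  have -> : \sum_j phi j (xs j - x) = phi i h.
    rewrite -(sum_if1 phi i h phi0); apply: eq_bigr => j _.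
    by rewrite /xs addrC addKr.
  rewrite -/C Cm1.
  suff hh2 : forall j, (g j (xs j) < (gx j + 1)%:E)%E by move/(_ hh2); lra.
  case=> [j|] /=; last first.
    have -> : xs None = xb by rewrite /xs /x /E; case: i {x xs} => [k|] //=; rewrite ?addr0 ?subrK.
    by rewrite fr0 lte_fin ltrDl.
  rewrite lte_fin.
  have : `|xb - xs (Some j)| < rb.
    rewrite /xs /x /E; case: i {x xs} => [k|] /=.
      case: (Some j == Some k); rewrite ?addr0 ?subrr ?normr0 //.
      by rewrite opprD addrA subrr add0r normrN.
    by rewrite addr0 opprB addrCA subrr addr0.
  move/hrb => /(_ j); lra.
have Pick : forall i eta, 0 < eta -> exists p : X * R,
    g i p.1 = p.2%:E /\ xi (phi i) - eta < phi i p.1 - nu i * p.2.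
  move=> i eta eta0.
  have [psi [Dpsi [beta hbeta]]] := @minorant _ _ (g i) (gprop i) (gconv i) (glsc i).
  pose q := xi psi.
  pose tau := eta / (2 * (1 + `|beta - q|)).
  have tau0 : 0 < tau by rewrite divr_gt0 // mulr_gt0 // ltr_pwDl.
  have htau : tau * (beta - q) < eta / 2.
    apply: le_lt_trans (_ : tau * `|beta - q| < eta / 2).
      by rewrite ler_pM2l // ler_norm.
    rewrite /tau; set a := `|beta - q|.
    have a0 : 0 <= a by apply: normr_ge0.
    have -> : eta / (2 * (1 + a)) * a = eta / 2 * (a / (1 + a)) by field; rewrite gt_eqF // ltr_pwDl.
    rewrite gtr_pMr ?divr_gt0 // ltr_pdivrMr ?ltr_pwDl // mul1r; lra.
  pose phi' := fun x => tau * psi x + phi i x.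
  have D' : in_dual phi' by apply: dual_comb.
  have lam0 : 0 < nu i + tau by apply: ltr_wpDl.
  have eta2 : 0 < eta / 2 by rewrite divr_gt0.
  have [x [r [gxr hx]]] := @pick_conj _ _ xi hxi (g i) (gN i) (hbg i) phi' D' (nu i + tau) (eta / 2) lam0 eta2.
  exists (x, r); split => //=.
  have e1 : xi phi' = tau * q + xi (phi i) by apply: xiC.
  rewrite e1 /phi' in hx.
  have h3 : tau * (psi x - r) <= tau * beta by rewrite ler_pM2l //; apply: hbeta.
  move: hx htau h3; rewrite /q; nra.
pose N := \sum_(i : I) (1 : R).
have N0 : 0 <= N by apply: sumr_ge0.
pose eta := eps * S / (S + N).
have eta0 : 0 < eta by rewrite /eta divr_gt0 ?mulr_gt0 // ltr_wpDr.
have [pk hpk] := choice (fun i => Pick i eta eta0).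
have hK := K (fun i => (pk i).1) (fun i => (pk i).2 + eta).
have : forall i, (g i (pk i).1 < ((pk i).2 + eta)%:E)%E.
  by move=> i; rewrite (hpk i).1 lte_fin ltrDl.
move/hK => {}hK.
have sx : \sum_i xi (phi i) = 0.
  rewrite -(@xi_sum _ _ xi hxi _ (index_enum I) phi Dphi).
  have -> : (fun x => \sum_(i <- index_enum I) phi i x) = (fun _ => 0).
    by apply: funext => x; apply: sum0.
  exact: xi0.
have lt1 : \sum_i xi (phi i) < \sum_i (phi i (pk i).1 - nu i * (pk i).2 + eta).
  apply: ltr_sum.
    by apply/hasP; exists None => //; rewrite mem_index_enum.
  by move=> i _; have := (hpk i).2; lra.
have e1 : \sum_i (phi i (pk i).1 - nu i * (pk i).2 + eta) =
    \sum_i phi i (pk i).1 - \sum_i nu i * (pk i).2 + eta * N.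
  rewrite big_split sumrB /N mulr_sumr /=; congr (_ + _).
  by apply: eq_bigr => i _; rewrite mulr1.
have e2 : \sum_i nu i * ((pk i).2 + eta - eps) = \sum_i nu i * (pk i).2 + (eta - eps) * S.
  rewrite /S mulr_sumr -big_split /=; apply: eq_bigr => i _; ring.
have e3 : eta * N + (eta - eps) * S = 0.
  rewrite /eta; field; apply/eqP => h.
  have : 0 < S + N by rewrite ltr_wpDr.
  by rewrite h ltxx.
rewrite sx e1 in lt1; rewrite e2 in hK.
move: lt1 hK e3; exact: final_aux.
Qed.
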